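(* Let $\epsilon>0$, $n\ge1$, $s=\sqrt{e^\epsilon}$, and let $\mathbf{w}\in\mathbb{R}^d$ be non-increasing. For parameters $\mathbf{m}$ (with $m_j\ge0$, $\sum_jm_j=1$) and $c\in\mathbb{R}$, let $\mathrm{err}_{\mathrm{MSE}}(\mathbf{m},c)=\mathbb{E}[|\tilde\theta-\theta|_2^2]$, where $n$ voters with scored votes $v^{(1)},\dots,v^{(n)}$ independently apply the weighted sampling mechanism with parameters $(\epsilon,\mathbf{w},\mathbf{m},c)$ to get $\tilde v^{(i)}$, $\theta=\frac1n\sum_iv^{(i)}$, $\tilde\theta=\frac1n\sum_i\tilde v^{(i)}$. Then $$\min_{\mathbf{m},c}\mathrm{err}_{\mathrm{MSE}}(\mathbf{m},c)\le\frac1n\Big(1+\frac{ds}{(s-1)^2}\Big)\Big(\sum_{j=1}^d|w_j-w_{\lceil d/2\rceil}|\Big)^2.$$ Moreover, if $\mathbf{w}$ is not constant, this upper bound holds for the choice $c^*=w_{\lceil d/2\rceil}$ and $m^*_j=\frac{|w_j-c^*|}{\sum_{i=1}^d|w_i-c^*|}$.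
   Context: Candidates are $A_1,\dots,A_d$; a vote $\pi$ is a linear ordering, $\pi_j$ the index of the candidate at rank $j$; the scored vote is $v$ with $v_{\pi_j}=w_j$. The weighted sampling mechanism with parameters $(\epsilon,\mathbf{w},\mathbf{m},c)$, on input $\pi$: (1) samples a rank $j^*$ with $\Pr[j^*=j]=m_j$, independently of $\pi$; (2) sets $B\in\{0,1\}^d$ with $B_{\pi_{j^*}}=1$, other entries $0$; (3) independently for each $k$, sets $\tilde B_k=1-B_k$ with probability $\frac1{s+1}$, else $\tilde B_k=B_k$; (4) outputs $\tilde v_k=\frac{(s+1)\tilde B_k-1}{s-1}\cdot\frac{w_{j^*}-c}{m_{j^*}}+c$. *)

(* Defs.v *)
From HB Require Import structures.
From mathcomp Require Import all_boot all_order all_algebra fingroup perm.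
From mathcomp Require Import reals.
From mathcomp Require Import sequences exp.
Set Implicit Arguments. Unset Strict Implicit. Unset Printing Implicit Defensive.
Import Order.TTheory GRing.Theory Num.Theory.
Local Open Scope ring_scope.

Section WS.
Variable R : realType.

Definition s_of (eps : R) : R := Num.sqrt (expR eps).

(* scored vote of the ranking pi (pi j = candidate at rank j): v_{pi j} = w j *)
Definition scored d (w : 'I_d -> R) (pi : {perm 'I_d}) (k : 'I_d) : R :=
  w ((pi^-1)%g k).

Definition valid_m d (m : 'I_d -> R) : Prop :=
  (forall j, 0 <= m j) /\ \sum_(j < d) m j = 1.

Definition flip_prob (s : R) (b : bool) : R :=
  if b then 1 / (s + 1) else 1 - 1 / (s + 1).

Definition ws_prob d (s : R) (m : 'I_d -> R) (j : 'I_d) (f : {ffun 'I_d -> bool}) : R :=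
  m j * \prod_(k < d) flip_prob s (f k).

(* output coordinate k of the weighted sampling mechanism, given the
   sampled rank j and flip pattern f (f k = true iff bit k is flipped) *)
Definition ws_out d (s : R) (w m : 'I_d -> R) (c : R) (pi : {perm 'I_d})
    (j : 'I_d) (f : {ffun 'I_d -> bool}) (k : 'I_d) : R :=
  let Bt := ((pi j == k) (+) f k) in
  (((s + 1) * (Bt%:R) - 1) / (s - 1)) * ((w j - c) / m j) + c.

(* err_MSE(m,c) = E |theta~ - theta|_2^2 for the vote profile pis of n voters,
   each voter running the mechanism independently. *)
Definition errMSE (eps : R) n d (w m : 'I_d -> R) (c : R)
    (pis : 'I_n -> {perm 'I_d}) : R :=
  let s := s_of eps in
  \sum_(o : {ffun 'I_n -> 'I_d * {ffun 'I_d -> bool}})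
    (\prod_(i < n) ws_prob s m (o i).1 (o i).2) *
    \sum_(k < d)
      ((n%:R)^-1 * \sum_(i < n) ws_out s w m c (pis i) (o i).1 (o i).2 k
       - (n%:R)^-1 * \sum_(i < n) scored w (pis i) k) ^+ 2.

(* w_{ceil(d/2)} (1-indexed), i.e. index (d-1)/2 (0-indexed) *)
Lemma mid_lt d : (0 < d)%N -> ((d.-1)./2 < d)%N.
Proof. by case: d => // d _; rewrite ltnS -divn2 leq_div. Qed.

Definition w_mid d (hd : (0 < d)%N) (w : 'I_d -> R) : R :=
  w (Ordinal (mid_lt hd)).

Definition m_star d (w : 'I_d -> R) (cs : R) : 'I_d -> R :=
  fun j => `|w j - cs| / \sum_(i < d) `|w i - cs|.

Definition bound (eps : R) n d (w : 'I_d -> R) (cs : R) : R :=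
  let s := s_of eps in
  (n%:R)^-1 * (1 + d%:R * s / (s - 1) ^+ 2) * (\sum_(j < d) `|w j - cs|) ^+ 2.

End WS.

(* Main.v *)
Require Import Defs.
From HB Require Import structures.
From mathcomp Require Import all_boot all_order all_algebra fingroup perm.
From mathcomp Require Import reals.
From mathcomp Require Import sequences exp.
From mathcomp Require Import ring lra.
Import Order.TTheory GRing.Theory Num.Theory.
Local Open Scope ring_scope.

Section Helpers.
Variable R : realType.

Lemma prod_if (I : finType) (a : I) (F : I -> R) :
  \prod_(i : I) (if i == a then F i else 1) = F a.
Proof. by rewrite -big_mkcond big_pred1_eq. Qed.

Lemma E2 (I J : finType) (q : J -> R) (a b : I) (ha hb : J -> R) :
  \sum_j q j = 1 ->
  \sum_(f : {ffun I -> J}) (\prod_i q (f i)) * (ha (f a) * hb (f b)) =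
  if a == b then \sum_j q j * (ha j * hb j)
  else (\sum_j q j * ha j) * (\sum_j q j * hb j).
Proof.
move=> q1.
transitivity (\sum_(f : {ffun I -> J}) \prod_i
   (q (f i) * ((if i == a then ha (f i) else 1) * (if i == b then hb (f i) else 1)))).
  apply: eq_bigr => f _; rewrite big_split /= big_split /=.
  by rewrite (@prod_if _ a (fun i => ha (f i))) (@prod_if _ b (fun i => hb (f i))).
rewrite -(bigA_distr_bigA (fun i j => q j * ((if i == a then ha j else 1) * (if i == b then hb j else 1)))) /=.
rewrite (bigD1 a) //= eqxx.
case: (a =P b) => [<-|/eqP nab].
  rewrite [X in _ * X]big1 ?mulr1 // => i nia.
  by rewrite (negbTE nia); under eq_bigr do rewrite mulr1 mulr1.
rewrite (bigD1 b) /=; last by rewrite eq_sym.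
rewrite eqxx eq_sym (negbTE nab) [X in _ * (_ * X)]big1 ?mulr1.
  by congr (_ * _); apply: eq_bigr => j _; rewrite ?mulr1 ?mul1r.
move=> i /andP [nia nib].
by rewrite (negbTE nia) (negbTE nib); under eq_bigr do rewrite mulr1 mulr1.
Qed.

Lemma E1 (I J : finType) (q : J -> R) (a : I) (h : J -> R) :
  \sum_j q j = 1 ->
  \sum_(f : {ffun I -> J}) (\prod_i q (f i)) * h (f a) = \sum_j q j * h j.
Proof.
move=> q1; have := @E2 I J q a a h (fun _ => 1) q1; rewrite eqxx.
under eq_bigr => f _ do rewrite mulr1.
by under [in RHS]eq_bigr => j _ do rewrite mulr1.
Qed.

End Helpers.

Section Helpers2.
Variable R : realType.

Definition alpha (s : R) (B b : bool) : R := ((s + 1) * ((B (+) b)%:R) - 1) / (s - 1).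

Lemma sum_flip (s : R) : \sum_b flip_prob s b = 1.
Proof. rewrite big_bool /flip_prob /=; ring. Qed.

Lemma Ealpha (s : R) B : 1 < s -> \sum_b flip_prob s b * alpha s B b = B%:R.
Proof.
move=> s1; have h1 : s - 1 != 0 by rewrite subr_eq0 gt_eqF.
have h2 : s + 1 != 0 by apply/lt0r_neq0; lra.
by case: B; rewrite big_bool /flip_prob /alpha /=; field; rewrite h1 h2.
Qed.

Lemma Ealpha2 (s : R) B : 1 < s ->
  \sum_b flip_prob s b * (alpha s B b) ^+ 2 = s / (s - 1) ^+ 2 + B%:R.
Proof.
move=> s1; have h1 : s - 1 != 0 by rewrite subr_eq0 gt_eqF.
have h2 : s + 1 != 0 by apply/lt0r_neq0; lra.
by case: B; rewrite big_bool /flip_prob /alpha /=; field; rewrite h1 h2.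
Qed.

Lemma var_le (T : finType) (P Y : T -> R) (v c : R) :
  \sum_t P t = 1 -> \sum_t P t * Y t = v ->
  \sum_t P t * (Y t - v) ^+ 2 <= \sum_t P t * (Y t - c) ^+ 2.
Proof.
move=> P1 PY; rewrite -subr_ge0 -sumrB.
rewrite (eq_bigr (fun t => (2 * (v - c)) * (P t * Y t) + (c ^+ 2 - v ^+ 2) * P t)); last first.
  by move=> t _; ring.
rewrite big_split /= -!mulr_sumr PY P1.
have -> : 2 * (v - c) * v + (c ^+ 2 - v ^+ 2) * 1 = (v - c) ^+ 2 by ring.
exact: sqr_ge0.
Qed.

End Helpers2.
Arguments alpha {R}.

Section MSE.
Variable R : realType.

Lemma sum_pick (I : finType) (i : I) (F : I -> R) :
  \sum_(i' : I) (if i == i' then F i' else 0) = F i.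
Proof.
rewrite (bigD1 i) //= eqxx big1 ?addr0 // => j /negbTE.
by rewrite eq_sym => ->.
Qed.

Lemma mse_gen (n d : nat) (T : finType) (q : T -> R)
   (Y : 'I_n -> 'I_d -> T -> R) (v : 'I_n -> 'I_d -> R) :
  \sum_t q t = 1 -> (forall i k, \sum_t q t * Y i k t = v i k) ->
  \sum_(o : {ffun 'I_n -> T}) (\prod_i q (o i)) *
    \sum_(k < d) ((n%:R)^-1 * \sum_(i < n) Y i k (o i)
                  - (n%:R)^-1 * \sum_(i < n) v i k) ^+ 2
  = (n%:R)^-1 ^+ 2 * \sum_(i < n) \sum_(k < d) \sum_t q t * (Y i k t - v i k) ^+ 2.
Proof.
move=> q1 qY.
set Z := fun i k t => Y i k t - v i k.
rewrite (eq_bigr (fun o : {ffun 'I_n -> T} => \sum_(k < d) \sum_(i < n) \sum_(i' < n)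
   (n%:R)^-1 ^+ 2 * ((\prod_j q (o j)) * (Z i k (o i) * Z i' k (o i'))))); last first.
  move=> o _; rewrite mulr_sumr; apply: eq_bigr => k _.
  rewrite -mulrBr -sumrB.
  under [RHS]eq_bigr => i _ do rewrite -mulr_sumr -mulr_sumr.
  rewrite -mulr_sumr -mulr_sumr.
  have -> : \sum_(i < n) \sum_(i' < n) Z i k (o i) * Z i' k (o i') =
            (\sum_(i < n) Z i k (o i)) ^+ 2.
    by rewrite expr2 mulr_suml; apply: eq_bigr => i _; rewrite mulr_sumr.
  rewrite /Z; ring.
rewrite exchange_big /=.
under eq_bigr => k _ do rewrite exchange_big /=.
under eq_bigr => k _ do under eq_bigr => i _ do rewrite exchange_big /=.
under eq_bigr => k _ do under eq_bigr => i _ do under eq_bigr => i' _ do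
  rewrite -mulr_sumr (@E2 R _ _ q i i' (Z i k) (Z i' k) q1).
have Z0 : forall i k, \sum_t q t * Z i k t = 0.
  move=> i k; rewrite /Z; under eq_bigr do rewrite mulrBr.
  by rewrite sumrB qY -mulr_suml q1 mul1r subrr.
under eq_bigr => k _ do under eq_bigr => i _ do under eq_bigr => i' _ do
  rewrite Z0 mul0r.
under eq_bigr => k _ do under eq_bigr => i _ do
  rewrite -mulr_sumr (@sum_pick _ i (fun i' => \sum_j q j * (Z i k j * Z i' k j))).
rewrite exchange_big /= mulr_sumr; apply: eq_bigr => i _; rewrite mulr_sumr.
apply: eq_bigr => k _; congr (_ * _); apply: eq_bigr => t _.
Qed.
End MSE.

Section Voter.
Variable R : realType.
Variables (d : nat) (s : R) (w m : 'I_d -> R) (c : R).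
Hypothesis s1 : 1 < s.

Lemma sum_prod_flip :
  \sum_(f : {ffun 'I_d -> bool}) \prod_k flip_prob s (f k) = 1.
Proof.
rewrite -(bigA_distr_bigA (fun _ b => flip_prob s b)) /=.
by apply: big1 => k _; exact: sum_flip.
Qed.

Lemma sumP : valid_m m ->
  \sum_(t : 'I_d * {ffun 'I_d -> bool}) ws_prob s m t.1 t.2 = 1.
Proof.
move=> [_ hm]; rewrite -(pair_bigA _ (fun j f => ws_prob s m j f)) /=.
rewrite -[RHS]hm; apply: eq_bigr => j _.
by rewrite /ws_prob -mulr_sumr sum_prod_flip mulr1.
Qed.

Lemma voter_mean (pi : {perm 'I_d}) k :
  valid_m m -> (forall j, m j * ((w j - c) / m j) = w j - c) ->
  \sum_(t : 'I_d * {ffun 'I_d -> bool})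
     ws_prob s m t.1 t.2 * ws_out s w m c pi t.1 t.2 k = scored w pi k.
Proof.
move=> [_ hm] hX.
rewrite -(pair_bigA _ (fun j f => ws_prob s m j f * ws_out s w m c pi j f k)) /=.
have inner : forall j, \sum_(f : {ffun 'I_d -> bool}) ws_prob s m j f * ws_out s w m c pi j f k
   = m j * ((pi j == k)%:R * ((w j - c) / m j) + c).
  move=> j.
  transitivity (m j * \sum_(f : {ffun 'I_d -> bool}) (\prod_i flip_prob s (f i)) *
     (fun b => alpha s (pi j == k) b * ((w j - c) / m j) + c) (f k)).
    by rewrite mulr_sumr; apply: eq_bigr => f _; rewrite /ws_prob mulrA.
  rewrite (@E1 R _ _ (flip_prob s) k (fun b => alpha s (pi j == k) b * ((w j - c) / m j) + c)) ?sum_flip //; congr (_ * _).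
  under eq_bigr do rewrite mulrDr mulrA.
  by rewrite big_split /= -!mulr_suml Ealpha // sum_flip mul1r.
under eq_bigr do rewrite inner.
under eq_bigr do rewrite mulrDr mulrCA hX.
rewrite big_split /= -mulr_suml hm mul1r.
rewrite (bigD1 ((pi^-1)%g k)) //= permKV eqxx mul1r big1 ?addr0.
  by rewrite /scored subrK.
move=> j nj; rewrite (_ : (pi j == k) = false) ?mul0r //.
apply/negbTE; apply: contra nj => /eqP <-; by rewrite permK.
Qed.

Lemma voter_mom2 (pi : {perm 'I_d}) k :
  \sum_(t : 'I_d * {ffun 'I_d -> bool})
     ws_prob s m t.1 t.2 * (ws_out s w m c pi t.1 t.2 k - c) ^+ 2 =
  \sum_j m j * ((w j - c) / m j) ^+ 2 * (s / (s - 1) ^+ 2 + (pi j == k)%:R).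
Proof.
rewrite -(pair_bigA _ (fun j f => ws_prob s m j f * (ws_out s w m c pi j f k - c) ^+ 2)) /=.
apply: eq_bigr => j _.
transitivity (m j * \sum_(f : {ffun 'I_d -> bool}) (\prod_i flip_prob s (f i)) *
   (fun b => (alpha s (pi j == k) b * ((w j - c) / m j) + c - c) ^+ 2) (f k)).
  by rewrite mulr_sumr; apply: eq_bigr => f _; rewrite /ws_prob mulrA.
rewrite (@E1 R _ _ (flip_prob s) k (fun b => (alpha s (pi j == k) b * ((w j - c) / m j) + c - c) ^+ 2)) ?sum_flip //.
under eq_bigr do rewrite addrK exprMn mulrA.
by rewrite -mulr_suml Ealpha2 // mulrA mulrAC.
Qed.

Lemma voter_sumk (pi : {perm 'I_d}) :
  \sum_k \sum_(t : 'I_d * {ffun 'I_d -> bool})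
     ws_prob s m t.1 t.2 * (ws_out s w m c pi t.1 t.2 k - c) ^+ 2 =
  (1 + d%:R * s / (s - 1) ^+ 2) * \sum_j m j * ((w j - c) / m j) ^+ 2.
Proof.
under eq_bigr do rewrite voter_mom2.
rewrite exchange_big /= mulr_sumr; apply: eq_bigr => j _.
rewrite -mulr_sumr big_split /= sumr_const card_ord.
rewrite (bigD1 (pi j)) //= eqxx big1 ?addr0; last first.
  by move=> k; rewrite eq_sym => /negbTE ->.
rewrite -[_ *+ d]mulr_natl /=. ring.
Qed.

End Voter.

Section Mstar.
Variable R : realType.
Variables (d : nat) (w : 'I_d -> R) (cs : R).

Lemma mstar_sq j :
  m_star w cs j * ((w j - cs) / m_star w cs j) ^+ 2 =
  `|w j - cs| * \sum_(i < d) `|w i - cs|.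
Proof.
rewrite /m_star; set a := w j - cs; set S := \sum_(i < d) _.
have [->|a0] := eqVneq a 0; first by rewrite normr0 !mul0r.
have [->|S0] := eqVneq S 0; first by rewrite invr0 !mulr0 mul0r.
have na0 : `|a| != 0 by rewrite normr_eq0.
rewrite exprMn -(real_normK (num_real a)); field.
by rewrite na0 S0.
Qed.

Lemma S_neq0 : (exists i j : 'I_d, w i != w j) -> \sum_(i < d) `|w i - cs| != 0.
Proof.
move=> [i [j nij]]; apply/negP => /eqP S0.
have H := psumr_eq0P (fun k _ => normr_ge0 (w k - cs)) S0.
have /eqP := H i isT; rewrite normr_eq0 subr_eq0 => /eqP Hi.
have /eqP := H j isT; rewrite normr_eq0 subr_eq0 => /eqP Hj.
by rewrite Hi Hj eqxx in nij.
Qed.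

Lemma mstar_valid : \sum_(i < d) `|w i - cs| != 0 -> valid_m (m_star w cs).
Proof.
move=> S0; split.
  move=> j; rewrite /m_star divr_ge0 //; apply: sumr_ge0 => i _; exact: normr_ge0.
by rewrite /m_star -mulr_suml divff.
Qed.

Lemma mstar_X : \sum_(i < d) `|w i - cs| != 0 ->
  forall j, m_star w cs j * ((w j - cs) / m_star w cs j) = w j - cs.
Proof.
move=> S0 j; have [->|a0] := eqVneq (w j - cs) 0; first by rewrite mul0r mulr0.
have mj : m_star w cs j != 0.
  by rewrite /m_star mulf_neq0 // ?invr_eq0 // normr_eq0.
by rewrite mulrC divfK.
Qed.

End Mstar.

Theorem theorem5p4 (R : realType) (eps : R) (n d : nat) (hd : (0 < d)%N)
    (w : 'I_d -> R) :
  0 < eps -> (0 < n)%N ->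
  (forall i j : 'I_d, (i <= j)%N -> w j <= w i) ->
  (forall pis : 'I_n -> {perm 'I_d},
     exists (m : 'I_d -> R) (c : R), valid_m m /\
       errMSE eps w m c pis <= bound eps n w (w_mid hd w)) /\
  ((exists i j : 'I_d, w i != w j) ->
     valid_m (m_star w (w_mid hd w)) /\
     forall pis : 'I_n -> {perm 'I_d},
       errMSE eps w (m_star w (w_mid hd w)) (w_mid hd w) pis
         <= bound eps n w (w_mid hd w)).
Proof.
move=> eps0 n0 _.
set cs := w_mid hd w.
set s := s_of eps.
have s1 : 1 < s.
  by rewrite /s /s_of -[X in X < _]sqrtr1 ltr_sqrt ?expR_gt0 // expR_gt1.
have s0 : 0 <= s by apply: ltW; apply: lt_trans s1; exact: ltr01.
have K0 : 0 <= 1 + d%:R * s / (s - 1) ^+ 2.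
  by apply: addr_ge0 => //; apply: divr_ge0; [apply: mulr_ge0 | exact: sqr_ge0].
have n0' : n%:R != 0 :> R by rewrite pnatr_eq0 -lt0n.
have part2 : (exists i j : 'I_d, w i != w j) ->
     valid_m (m_star w cs) /\
     forall pis : 'I_n -> {perm 'I_d},
       errMSE eps w (m_star w cs) cs pis <= bound eps n w cs.
  move=> ne; have S0 := @S_neq0 R d w cs ne; have hv := @mstar_valid R d w cs S0; split => // pis.
  have E := @mse_gen R n d _ (fun t => ws_prob s (m_star w cs) t.1 t.2)
     (fun i k t => ws_out s w (m_star w cs) cs (pis i) t.1 t.2 k)
     (fun i k => scored w (pis i) k) (@sumP R d s _ hv)
     (fun i k => @voter_mean R d s w (m_star w cs) cs s1 (pis i) k hv (@mstar_X R d w cs S0)).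
  have E' : errMSE eps w (m_star w cs) cs pis = _ := E.
  rewrite E'.
  have HS : \sum_j m_star w cs j * ((w j - cs) / m_star w cs j) ^+ 2
            = (\sum_(i < d) `|w i - cs|) ^+ 2.
    by under eq_bigr do rewrite mstar_sq; rewrite -mulr_suml expr2.
  apply: (@le_trans _ _ ((n%:R)^-1 ^+ 2 * \sum_(i < n)
      ((1 + d%:R * s / (s - 1) ^+ 2) * (\sum_(j < d) `|w j - cs|) ^+ 2))).
    rewrite ler_wpM2l ?exprn_ge0 ?invr_ge0 ?ler0n //; apply: ler_sum => i _.
    rewrite -HS -(@voter_sumk R d s w (m_star w cs) cs s1 (pis i)).
    apply: ler_sum => k _; apply: var_le; first exact: (@sumP R d s _ hv).
    exact: (@voter_mean R d s w (m_star w cs) cs s1 (pis i) k hv (@mstar_X R d w cs S0)).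
  rewrite sumr_const card_ord -[_ *+ n]mulr_natl /bound -/s.
  rewrite le_eqVlt; apply/orP; left; apply/eqP; field.
  by rewrite n0' andbT subr_eq0 gt_eqF.
split; last exact: part2.
move=> pis.
case: (boolP [exists i, exists j, w i != w j]) => [/existsP [i /existsP [j nij]] | hc].
  exists (m_star w cs), cs.
  have [hv h] := part2 (ex_intro _ i (ex_intro _ j nij)); split => //; exact: h.
have wc : forall j, w j = cs.
  move=> j; apply/eqP; apply: contraNT hc => nj; apply/existsP; exists j.
  by apply/existsP; exists (Ordinal (mid_lt hd)).
exists (fun j => (j == Ordinal (mid_lt hd))%:R), cs; split.
  split => [j|]; first exact: ler0n.
  by rewrite (bigD1 (Ordinal (mid_lt hd))) //= eqxx big1 ?addr0 // => j /negbTE ->.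
set m0 := fun j : 'I_d => (j == Ordinal (mid_lt hd))%:R.
have -> : errMSE eps w m0 cs pis = 0.
  rewrite /errMSE /=; apply: big1 => o _.
  rewrite [X in _ * X]big1 ?mulr0 // => k _.
  under eq_bigr do rewrite /ws_out wc subrr mul0r mulr0 add0r.
  under [X in _ - _ * X]eq_bigr do rewrite /scored wc.
  by rewrite subrr expr0n.
rewrite /bound; apply: mulr_ge0; last exact: sqr_ge0.
by apply: mulr_ge0 => //; rewrite invr_ge0 ler0n.
Qed.
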